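(* For $n\ge3$, let $n$-Go denote the equation $a_1\overset{\gamma}{\equiv}a_n=a_n\overset{\gamma}{\equiv}a_1$. Then: (i) for every $n\ge3$, $n$-Go holds in every ortholattice that admits a strong set of states; (ii) every ortholattice satisfying $n$-Go (for any $n\ge3$) is orthomodular; (iii) for every $n\ge 3$, there is an orthomodular lattice in which $n$-Go fails.
   Context: An ortholattice (OL) is a bounded lattice with an operation $'$ satisfying $a''=a$, $a\le b\Rightarrow b'\le a'$, $a\cap a'=0$ and $a\cup a'=1$. An orthomodular lattice is an OL in which $a\le b$ implies $b=a\cup(a'\cap b)$. Write $a\to b=a'\cup(a\cap b)$ and $a\perp b$ for $a\le b'$. The Godowski identity is $$a_1\overset{\gamma}{\equiv}a_n=(a_1\to a_2)\cap(a_2\to a_3)\cap\cdots\cap(a_{n-1}\to a_n)\cap(a_n\to a_1),$$ and $$a_n\overset{\gamma}{\equiv}a_1=(a_n\to a_{n-1})\cap(a_{n-1}\to a_{n-2})\cap\cdots\cap(a_2\to a_1)\cap(a_1\to a_n).$$ A state on an OL $L$ is a map $m:L\to[0,1]$ with $m(1)=1$ and $a\perp b\Rightarrow m(a\cup b)=m(a)+m(b)$. $L$ admits a strong set of states if there is a nonempty set $S$ of states such that for all $a,b\in L$ with $a\not\le b$ some $m\in S$ has $m(a)=1$ and $m(b)\neq1$. *)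

(* Defs.v *)
From Stdlib Require Import Reals.
Open Scope R_scope.

Record OL := {
  carrier :> Type;
  meet : carrier -> carrier -> carrier;
  join : carrier -> carrier -> carrier;
  compl : carrier -> carrier;
  zero : carrier;
  one : carrier;
  meetC : forall a b, meet a b = meet b a;
  joinC : forall a b, join a b = join b a;
  meetA : forall a b c, meet a (meet b c) = meet (meet a b) c;
  joinA : forall a b c, join a (join b c) = join (join a b) c;
  meet_join_absorb : forall a b, meet a (join a b) = a;
  join_meet_absorb : forall a b, join a (meet a b) = a;
  meet0 : forall a, meet zero a = zero;
  join1 : forall a, join one a = one;
  complK : forall a, compl (compl a) = a;
  compl_anti : forall a b, meet a b = a -> meet (compl b) (compl a) = compl b;
  meet_compl : forall a, meet a (compl a) = zero;
  join_compl : forall a, join a (compl a) = one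
}.

Arguments meet {o}.
Arguments join {o}.
Arguments compl {o}.
Arguments zero {o}.
Arguments one {o}.

Definition ole {L : OL} (a b : L) : Prop := meet a b = a.

Definition orth {L : OL} (a b : L) : Prop := ole a (compl b).

Definition orthomodular (L : OL) : Prop :=
  forall a b : L, ole a b -> b = join a (meet (compl a) b).

Definition imp {L : OL} (a b : L) : L := join (compl a) (meet a b).

(* Variables a_1, ..., a_n are represented by a 0, ..., a (n-1). *)
Fixpoint chain_fwd {L : OL} (a : nat -> L) (k : nat) : L :=
  match k with
  | O => one
  | S k' => meet (chain_fwd a k') (imp (a k') (a k))
  end.

Fixpoint chain_bwd {L : OL} (a : nat -> L) (k : nat) : L :=
  match k with
  | O => one
  | S k' => meet (chain_bwd a k') (imp (a k) (a k'))
  end.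

(* a_1 ==gamma a_n = (a1->a2) /\ ... /\ (a(n-1)->an) /\ (an->a1) *)
Definition go_fwd {L : OL} (n : nat) (a : nat -> L) : L :=
  meet (chain_fwd a (n - 1)) (imp (a (n - 1)%nat) (a O)).

(* a_n ==gamma a_1 = (an->a(n-1)) /\ ... /\ (a2->a1) /\ (a1->an) *)
Definition go_bwd {L : OL} (n : nat) (a : nat -> L) : L :=
  meet (chain_bwd a (n - 1)) (imp (a O) (a (n - 1)%nat)).

Definition satisfies_Go (n : nat) (L : OL) : Prop :=
  forall a : nat -> L, go_fwd n a = go_bwd n a.

Definition is_state {L : OL} (m : L -> R) : Prop :=
  (forall x, 0 <= m x <= 1) /\
  m one = 1 /\
  (forall a b, orth a b -> m (join a b) = m a + m b).

Definition admits_strong_states (L : OL) : Prop :=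
  exists S : (L -> R) -> Prop,
    (exists m, S m) /\
    (forall m, S m -> is_state m) /\
    (forall a b : L, ~ ole a b -> exists m, S m /\ m a = 1 /\ m b <> 1).

(* Main.v *)
Require Import Defs.
From Stdlib Require Import Reals Arith Lia Lra List Bool Classical.

Section OLTheory.
Variable L : OL.

Lemma meet_idem (a : L) : meet a a = a.
Proof.
  rewrite <- (join_meet_absorb L a a) at 2. apply meet_join_absorb.
Qed.

Lemma ole_refl (a : L) : ole a a.
Proof. apply meet_idem. Qed.

Lemma ole_trans (a b c : L) : ole a b -> ole b c -> ole a c.
Proof.
  unfold ole; intros H1 H2. rewrite <- H1, <- meetA, H2. reflexivity.
Qed.

Lemma ole_antisym (a b : L) : ole a b -> ole b a -> a = b.
Proof. unfold ole; intros H1 H2. rewrite <- H1, meetC. exact H2. Qed.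

Lemma ole_join (a b : L) : ole a b <-> join a b = b.
Proof.
  unfold ole; split; intro H.
  - rewrite <- H, joinC, meetC. apply join_meet_absorb.
  - rewrite <- H. apply meet_join_absorb.
Qed.

Lemma meet_lb1 (a b : L) : ole (meet a b) a.
Proof. unfold ole. rewrite (meetC _ a b), <- meetA, meet_idem. reflexivity. Qed.

Lemma meet_lb2 (a b : L) : ole (meet a b) b.
Proof. unfold ole. rewrite <- meetA, meet_idem. reflexivity. Qed.

Lemma meet_glb (a b c : L) : ole c a -> ole c b -> ole c (meet a b).
Proof. unfold ole; intros H1 H2. rewrite meetA, H1, H2. reflexivity. Qed.

Lemma join_ub1 (a b : L) : ole a (join a b).
Proof. apply meet_join_absorb. Qed.

Lemma join_ub2 (a b : L) : ole b (join a b).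
Proof. rewrite joinC. apply meet_join_absorb. Qed.

Lemma join_lub (a b c : L) : ole a c -> ole b c -> ole (join a b) c.
Proof.
  rewrite !ole_join; intros H1 H2. rewrite <- joinA, H2, H1. reflexivity.
Qed.

Lemma compl_le (a b : L) : ole a b -> ole (compl b) (compl a).
Proof. apply compl_anti. Qed.

Lemma ole_one (a : L) : ole a one.
Proof. apply ole_join. rewrite joinC. apply join1. Qed.

Lemma ole_zero (a : L) : ole zero a.
Proof. apply meet0. Qed.

Lemma meet_one (a : L) : meet a one = a.
Proof. apply ole_one. Qed.

Lemma meet_one_l (a : L) : meet one a = a.
Proof. rewrite meetC. apply meet_one. Qed.

Lemma join_zero_l (a : L) : join zero a = a.
Proof. apply ole_join, ole_zero. Qed.

Lemma compl_one : compl (one : L) = zero.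
Proof. rewrite <- (meet_compl L one). rewrite meet_one_l. reflexivity. Qed.

Lemma compl_join (a b : L) : compl (join a b) = meet (compl a) (compl b).
Proof.
  apply ole_antisym.
  - apply meet_glb; apply compl_le; [apply join_ub1 | apply join_ub2].
  - rewrite <- (complK L (meet (compl a) (compl b))).
    apply compl_le. apply join_lub.
    + rewrite <- (complK L a) at 1. apply compl_le, meet_lb1.
    + rewrite <- (complK L b) at 1. apply compl_le, meet_lb2.
Qed.

Lemma compl_meet (a b : L) : compl (meet a b) = join (compl a) (compl b).
Proof.
  rewrite <- (complK L (join (compl a) (compl b))), compl_join, !complK.
  reflexivity.
Qed.

Lemma imp_same (a : L) : imp a a = one.
Proof. unfold imp. rewrite meet_idem, joinC. apply join_compl. Qed.

Definition s3 (x y z : L) (k : nat) : L :=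
  match k with O => x | 1 => y | _ => z end.

Lemma chain_fwd_s3 (x y z : L) k : (2 <= k)%nat ->
  chain_fwd (s3 x y z) k = meet (meet one (imp x y)) (imp y z).
Proof.
  induction k as [|k IH]; intro Hk; [lia|].
  destruct (Nat.eq_dec k 1) as [->|Hk1]; [reflexivity|].
  change (chain_fwd (s3 x y z) (S k)) with (meet (chain_fwd (s3 x y z) k) (imp (s3 x y z k) (s3 x y z (S k)))). rewrite IH by lia.
  replace (s3 x y z k) with z by (destruct k as [|[|k]]; [lia|lia|reflexivity]).
  replace (s3 x y z (S k)) with z by (destruct k as [|[|k]]; [lia|lia|reflexivity]).
  rewrite imp_same, meet_one. reflexivity.
Qed.

Lemma chain_bwd_s3 (x y z : L) k : (2 <= k)%nat ->
  chain_bwd (s3 x y z) k = meet (meet one (imp y x)) (imp z y).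
Proof.
  induction k as [|k IH]; intro Hk; [lia|].
  destruct (Nat.eq_dec k 1) as [->|Hk1]; [reflexivity|].
  change (chain_bwd (s3 x y z) (S k)) with (meet (chain_bwd (s3 x y z) k) (imp (s3 x y z (S k)) (s3 x y z k))). rewrite IH by lia.
  replace (s3 x y z k) with z by (destruct k as [|[|k]]; [lia|lia|reflexivity]).
  replace (s3 x y z (S k)) with z by (destruct k as [|[|k]]; [lia|lia|reflexivity]).
  rewrite imp_same, meet_one. reflexivity.
Qed.

Lemma go_fwd_s3 n (x y z : L) : (3 <= n)%nat ->
  go_fwd n (s3 x y z) = meet (meet (meet one (imp x y)) (imp y z)) (imp z x).
Proof.
  intro Hn. unfold go_fwd. rewrite chain_fwd_s3 by lia.
  replace (s3 x y z (n - 1)) with z by (destruct n as [|[|[|n]]]; [lia|lia|lia|reflexivity]).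
  reflexivity.
Qed.

Lemma go_bwd_s3 n (x y z : L) : (3 <= n)%nat ->
  go_bwd n (s3 x y z) = meet (meet (meet one (imp y x)) (imp z y)) (imp x z).
Proof.
  intro Hn. unfold go_bwd. rewrite chain_bwd_s3 by lia.
  replace (s3 x y z (n - 1)) with z by (destruct n as [|[|[|n]]]; [lia|lia|lia|reflexivity]).
  reflexivity.
Qed.

Lemma Go_OM n : (3 <= n)%nat -> satisfies_Go n L -> orthomodular L.
Proof.
  intros Hn HG a b Hab.
  pose proof (HG (s3 one (compl b) (compl a))) as H.
  rewrite go_fwd_s3, go_bwd_s3 in H by exact Hn.
  assert (Hba : ole (compl b) (compl a)) by (apply compl_le; exact Hab).
  unfold imp in H. rewrite !compl_one, !meet_one_l, !meet_one, !complK in H.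
  rewrite !join_zero_l in H.
  rewrite Hba in H.
  rewrite !join_compl, meet_one, meet_one_l, meet_one in H.
  rewrite (meetC L (compl a) (compl b)), Hba in H.
  apply (f_equal compl) in H.
  rewrite complK, compl_meet, compl_join, !complK in H.
  rewrite joinC. exact H.
Qed.

Section States.
Variable m : L -> R.
Hypothesis Hm : is_state m.

Lemma st_compl (a : L) : m a + m (compl a) = 1.
Proof.
  destruct Hm as [_ [H1 H2]].
  rewrite <- H2, join_compl; [exact H1|].
  unfold orth. rewrite complK. apply ole_refl.
Qed.

Lemma st_mono (a b : L) : ole a b -> m a <= m b.
Proof.
  intro Hab. destruct Hm as [H0 [H1 H2]].
  assert (Ho : orth a (compl b)) by (unfold orth; rewrite complK; exact Hab).
  pose proof (H2 _ _ Ho). pose proof (H0 (join a (compl b))).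
  pose proof (st_compl b). lra.
Qed.

Lemma st_imp (a b : L) : m (imp a b) = 1 - m a + m (meet a b).
Proof.
  destruct Hm as [H0 [H1 H2]]. unfold imp. rewrite H2.
  - pose proof (st_compl a). lra.
  - unfold orth. apply compl_le, meet_lb1.
Qed.

Lemma st_imp_le (a b : L) : m (imp a b) = 1 -> m a <= m b.
Proof.
  intro H. rewrite st_imp in H. pose proof (st_mono _ _ (meet_lb2 a b)). lra.
Qed.

Lemma st_imp_rev (a b : L) : m (imp a b) = 1 -> m a = m b -> m (imp b a) = 1.
Proof.
  intros H Heq. rewrite st_imp in *. rewrite meetC. lra.
Qed.

Lemma st_le_one (a b : L) : ole a b -> m a = 1 -> m b = 1.
Proof.
  intros Hab Ha. pose proof (st_mono _ _ Hab). destruct Hm as [H0 _].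
  specialize (H0 b). lra.
Qed.
End States.

Lemma chain_fwd_le (a : nat -> L) K k : (k < K)%nat ->
  ole (chain_fwd a K) (imp (a k) (a (S k))).
Proof.
  induction K as [|K IH]; intro Hk; [lia|].
  simpl chain_fwd. destruct (Nat.eq_dec k K) as [->|Hne].
  - apply meet_lb2.
  - eapply ole_trans; [apply meet_lb1|]. apply IH. lia.
Qed.

Lemma chain_bwd_le (a : nat -> L) K k : (k < K)%nat ->
  ole (chain_bwd a K) (imp (a (S k)) (a k)).
Proof.
  induction K as [|K IH]; intro Hk; [lia|].
  simpl chain_bwd. destruct (Nat.eq_dec k K) as [->|Hne].
  - apply meet_lb2.
  - eapply ole_trans; [apply meet_lb1|]. apply IH. lia.
Qed.

Lemma chain_fwd_glb (a : nat -> L) (F : L) K :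
  (forall k, (k < K)%nat -> ole F (imp (a k) (a (S k)))) -> ole F (chain_fwd a K).
Proof.
  induction K as [|K IH]; intro H; simpl.
  - apply ole_one.
  - apply meet_glb; [apply IH; intros; apply H; lia | apply H; lia].
Qed.

Lemma chain_bwd_glb (a : nat -> L) (F : L) K :
  (forall k, (k < K)%nat -> ole F (imp (a (S k)) (a k))) -> ole F (chain_bwd a K).
Proof.
  induction K as [|K IH]; intro H; simpl.
  - apply ole_one.
  - apply meet_glb; [apply IH; intros; apply H; lia | apply H; lia].
Qed.

Lemma strong_le (St : (L -> R) -> Prop) (x y : L) :
  (forall m, St m -> is_state m) ->
  (forall a b : L, ~ ole a b -> exists m, St m /\ m a = 1 /\ m b <> 1) ->
  (forall m, St m -> m x = 1 -> m y = 1) -> ole x y.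
Proof.
  intros HS Hstr H. apply NNPP. intro Hn.
  destruct (Hstr _ _ Hn) as [m [Hm [H1 H2]]]. apply H2. apply H; assumption.
Qed.

Lemma fwd_le_bwd (St : (L -> R) -> Prop) n (a : nat -> L) :
  (forall m, St m -> is_state m) ->
  (forall a b : L, ~ ole a b -> exists m, St m /\ m a = 1 /\ m b <> 1) ->
  ole (go_fwd n a) (go_bwd n a).
Proof.
  intros HS Hstr.
  assert (Key : forall m, St m -> m (go_fwd n a) = 1 ->
     (forall k, (k < n - 1)%nat -> m (imp (a k) (a (S k))) = 1) /\
     m (imp (a (n-1)%nat) (a O)) = 1 /\
     forall k, (k <= n - 1)%nat -> m (a k) = m (a O)).
  { intros m Hm HF. pose proof (HS m Hm) as Hst.
    assert (H1 : forall k, (k < n - 1)%nat -> m (imp (a k) (a (S k))) = 1).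
    { intros k Hk. eapply st_le_one; [exact Hst| |exact HF].
      eapply ole_trans; [apply meet_lb1|]. apply chain_fwd_le; lia. }
    assert (H2 : m (imp (a (n-1)%nat) (a O)) = 1).
    { eapply st_le_one; [exact Hst| |exact HF]. apply meet_lb2. }
    split; [exact H1|]. split; [exact H2|].
    assert (Hup : forall j k, (k <= j)%nat -> (j <= n - 1)%nat -> m (a k) <= m (a j)).
    { induction j as [|j IH]; intros k Hkj Hj.
      - replace k with O by lia. lra.
      - destruct (Nat.eq_dec k (S j)) as [->|Hne]; [lra|].
        pose proof (IH k ltac:(lia) ltac:(lia)).
        pose proof (st_imp_le m Hst _ _ (H1 j ltac:(lia))). lra. }
    pose proof (st_imp_le m Hst _ _ H2).
    intros k Hk. pose proof (Hup k O ltac:(lia) Hk).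
    pose proof (Hup (n-1)%nat k Hk ltac:(lia)). lra. }
  apply meet_glb.
  - apply chain_bwd_glb. intros k Hk. apply (strong_le St); auto.
    intros m Hm HF. destruct (Key m Hm HF) as [H1 [H2 H3]].
    apply st_imp_rev; [apply HS; auto| apply H1; lia|].
    rewrite (H3 k), (H3 (S k)) by lia. reflexivity.
  - apply (strong_le St); auto.
    intros m Hm HF. destruct (Key m Hm HF) as [H1 [H2 H3]].
    apply st_imp_rev; [apply HS; auto| exact H2|].
    rewrite (H3 (n-1)%nat) by lia. reflexivity.
Qed.

Lemma bwd_le_fwd (St : (L -> R) -> Prop) n (a : nat -> L) :
  (forall m, St m -> is_state m) ->
  (forall a b : L, ~ ole a b -> exists m, St m /\ m a = 1 /\ m b <> 1) ->
  ole (go_bwd n a) (go_fwd n a).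
Proof.
  intros HS Hstr.
  assert (Key : forall m, St m -> m (go_bwd n a) = 1 ->
     (forall k, (k < n - 1)%nat -> m (imp (a (S k)) (a k)) = 1) /\
     m (imp (a O) (a (n-1)%nat)) = 1 /\
     forall k, (k <= n - 1)%nat -> m (a k) = m (a O)).
  { intros m Hm HF. pose proof (HS m Hm) as Hst.
    assert (H1 : forall k, (k < n - 1)%nat -> m (imp (a (S k)) (a k)) = 1).
    { intros k Hk. eapply st_le_one; [exact Hst| |exact HF].
      eapply ole_trans; [apply meet_lb1|]. apply chain_bwd_le; lia. }
    assert (H2 : m (imp (a O) (a (n-1)%nat)) = 1).
    { eapply st_le_one; [exact Hst| |exact HF]. apply meet_lb2. }
    split; [exact H1|]. split; [exact H2|].
    assert (Hup : forall j k, (k <= j)%nat -> (j <= n - 1)%nat -> m (a j) <= m (a k)).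
    { induction j as [|j IH]; intros k Hkj Hj.
      - replace k with O by lia. lra.
      - destruct (Nat.eq_dec k (S j)) as [->|Hne]; [lra|].
        pose proof (IH k ltac:(lia) ltac:(lia)).
        pose proof (st_imp_le m Hst _ _ (H1 j ltac:(lia))). lra. }
    pose proof (st_imp_le m Hst _ _ H2).
    intros k Hk. pose proof (Hup k O ltac:(lia) Hk).
    pose proof (Hup (n-1)%nat k Hk ltac:(lia)). lra. }
  apply meet_glb.
  - apply chain_fwd_glb. intros k Hk. apply (strong_le St); auto.
    intros m Hm HF. destruct (Key m Hm HF) as [H1 [H2 H3]].
    apply st_imp_rev; [apply HS; auto| apply H1; lia|].
    rewrite (H3 k), (H3 (S k)) by lia. reflexivity.
  - apply (strong_le St); auto.
    intros m Hm HF. destruct (Key m Hm HF) as [H1 [H2 H3]].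
    apply st_imp_rev; [apply HS; auto| exact H2|].
    rewrite (H3 (n-1)%nat) by lia. reflexivity.
Qed.

Lemma states_Go n : admits_strong_states L -> satisfies_Go n L.
Proof.
  intros [St [_ [HS Hstr]]] a. apply ole_antisym.
  - apply (fwd_le_bwd St); auto.
  - apply (bwd_le_fwd St); auto.
Qed.

End OLTheory.
Inductive E := e0 | e1 | e2 | e3 | e4 | e5 | e6 | e7 | e8 | e9 | e10 | e11 | e12 | e13 | e14 | e15 | e16 | e17 | e18 | e19 | e20 | e21 | e22 | e23 | e24 | e25 | e26 | e27 | e28 | e29 | e30 | e31 | e32 | e33.
Definition to_nat (x:E) : nat := match x with e0 => 0 | e1 => 1 | e2 => 2 | e3 => 3 | e4 => 4 | e5 => 5 | e6 => 6 | e7 => 7 | e8 => 8 | e9 => 9 | e10 => 10 | e11 => 11 | e12 => 12 | e13 => 13 | e14 => 14 | e15 => 15 | e16 => 16 | e17 => 17 | e18 => 18 | e19 => 19 | e20 => 20 | e21 => 21 | e22 => 22 | e23 => 23 | e24 => 24 | e25 => 25 | e26 => 26 | e27 => 27 | e28 => 28 | e29 => 29 | e30 => 30 | e31 => 31 | e32 => 32 | e33 => 33 end.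
Definition of_nat (n:nat) : E := match n with 0 => e0 | 1 => e1 | 2 => e2 | 3 => e3 | 4 => e4 | 5 => e5 | 6 => e6 | 7 => e7 | 8 => e8 | 9 => e9 | 10 => e10 | 11 => e11 | 12 => e12 | 13 => e13 | 14 => e14 | 15 => e15 | 16 => e16 | 17 => e17 | 18 => e18 | 19 => e19 | 20 => e20 | 21 => e21 | 22 => e22 | 23 => e23 | 24 => e24 | 25 => e25 | 26 => e26 | 27 => e27 | 28 => e28 | 29 => e29 | 30 => e30 | 31 => e31 | 32 => e32 | 33 => e33 | _ => e0 end.
Import ListNotations.
Definition allE : list E := [e0; e1; e2; e3; e4; e5; e6; e7; e8; e9; e10; e11; e12; e13; e14; e15; e16; e17; e18; e19; e20; e21; e22; e23; e24; e25; e26; e27; e28; e29; e30; e31; e32; e33].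
Definition meetE (a b : E) : E := match a with
 | e0 => match b with e0 => e0 | e1 => e32 | e2 => e32 | e3 => e32 | e4 => e32 | e5 => e32 | e6 => e32 | e7 => e32 | e8 => e32 | e9 => e32 | e10 => e32 | e11 => e32 | e12 => e32 | e13 => e32 | e14 => e32 | e15 => e32 | e16 => e32 | e17 => e0 | e18 => e0 | e19 => e32 | e20 => e0 | e21 => e32 | e22 => e0 | e23 => e32 | e24 => e32 | e25 => e32 | e26 => e32 | e27 => e32 | e28 => e32 | e29 => e32 | e30 => e32 | e31 => e32 | e32 => e32 | e33 => e0 end
 | e1 => match b with e0 => e32 | e1 => e1 | e2 => e32 | e3 => e32 | e4 => e32 | e5 => e32 | e6 => e32 | e7 => e32 | e8 => e32 | e9 => e32 | e10 => e32 | e11 => e32 | e12 => e32 | e13 => e32 | e14 => e32 | e15 => e32 | e16 => e1 | e17 => e32 | e18 => e1 | e19 => e32 | e20 => e32 | e21 => e32 | e22 => e32 | e23 => e32 | e24 => e32 | e25 => e32 | e26 => e32 | e27 => e32 | e28 => e32 | e29 => e32 | e30 => e32 | e31 => e32 | e32 => e32 | e33 => e1 end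
 | e2 => match b with e0 => e32 | e1 => e32 | e2 => e2 | e3 => e32 | e4 => e32 | e5 => e32 | e6 => e32 | e7 => e32 | e8 => e32 | e9 => e32 | e10 => e32 | e11 => e32 | e12 => e32 | e13 => e32 | e14 => e32 | e15 => e32 | e16 => e2 | e17 => e2 | e18 => e32 | e19 => e32 | e20 => e32 | e21 => e2 | e22 => e32 | e23 => e32 | e24 => e32 | e25 => e32 | e26 => e32 | e27 => e2 | e28 => e32 | e29 => e32 | e30 => e32 | e31 => e32 | e32 => e32 | e33 => e2 end
 | e3 => match b with e0 => e32 | e1 => e32 | e2 => e32 | e3 => e3 | e4 => e32 | e5 => e32 | e6 => e32 | e7 => e32 | e8 => e32 | e9 => e32 | e10 => e32 | e11 => e32 | e12 => e32 | e13 => e32 | e14 => e32 | e15 => e32 | e16 => e32 | e17 => e32 | e18 => e32 | e19 => e32 | e20 => e32 | e21 => e3 | e22 => e32 | e23 => e32 | e24 => e32 | e25 => e32 | e26 => e32 | e27 => e32 | e28 => e32 | e29 => e32 | e30 => e32 | e31 => e3 | e32 => e32 | e33 => e3 end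
 | e4 => match b with e0 => e32 | e1 => e32 | e2 => e32 | e3 => e32 | e4 => e4 | e5 => e32 | e6 => e32 | e7 => e32 | e8 => e32 | e9 => e32 | e10 => e32 | e11 => e32 | e12 => e32 | e13 => e32 | e14 => e32 | e15 => e32 | e16 => e4 | e17 => e32 | e18 => e32 | e19 => e32 | e20 => e32 | e21 => e32 | e22 => e4 | e23 => e32 | e24 => e32 | e25 => e32 | e26 => e4 | e27 => e32 | e28 => e32 | e29 => e32 | e30 => e32 | e31 => e4 | e32 => e32 | e33 => e4 end
 | e5 => match b with e0 => e32 | e1 => e32 | e2 => e32 | e3 => e32 | e4 => e32 | e5 => e5 | e6 => e32 | e7 => e32 | e8 => e32 | e9 => e32 | e10 => e32 | e11 => e32 | e12 => e32 | e13 => e32 | e14 => e32 | e15 => e32 | e16 => e32 | e17 => e32 | e18 => e5 | e19 => e5 | e20 => e32 | e21 => e32 | e22 => e32 | e23 => e32 | e24 => e32 | e25 => e32 | e26 => e32 | e27 => e5 | e28 => e32 | e29 => e32 | e30 => e32 | e31 => e5 | e32 => e32 | e33 => e5 end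
 | e6 => match b with e0 => e32 | e1 => e32 | e2 => e32 | e3 => e32 | e4 => e32 | e5 => e32 | e6 => e6 | e7 => e32 | e8 => e32 | e9 => e32 | e10 => e32 | e11 => e32 | e12 => e32 | e13 => e32 | e14 => e32 | e15 => e32 | e16 => e6 | e17 => e32 | e18 => e32 | e19 => e32 | e20 => e6 | e21 => e32 | e22 => e32 | e23 => e6 | e24 => e6 | e25 => e32 | e26 => e32 | e27 => e32 | e28 => e32 | e29 => e32 | e30 => e32 | e31 => e32 | e32 => e32 | e33 => e6 end
 | e7 => match b with e0 => e32 | e1 => e32 | e2 => e32 | e3 => e32 | e4 => e32 | e5 => e32 | e6 => e32 | e7 => e7 | e8 => e32 | e9 => e32 | e10 => e32 | e11 => e32 | e12 => e32 | e13 => e32 | e14 => e32 | e15 => e32 | e16 => e32 | e17 => e32 | e18 => e32 | e19 => e32 | e20 => e32 | e21 => e32 | e22 => e7 | e23 => e32 | e24 => e7 | e25 => e7 | e26 => e32 | e27 => e32 | e28 => e7 | e29 => e32 | e30 => e32 | e31 => e32 | e32 => e32 | e33 => e7 end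
 | e8 => match b with e0 => e32 | e1 => e32 | e2 => e32 | e3 => e32 | e4 => e32 | e5 => e32 | e6 => e32 | e7 => e32 | e8 => e8 | e9 => e32 | e10 => e32 | e11 => e32 | e12 => e32 | e13 => e32 | e14 => e32 | e15 => e32 | e16 => e32 | e17 => e32 | e18 => e32 | e19 => e32 | e20 => e32 | e21 => e32 | e22 => e8 | e23 => e8 | e24 => e32 | e25 => e32 | e26 => e32 | e27 => e32 | e28 => e32 | e29 => e32 | e30 => e32 | e31 => e32 | e32 => e32 | e33 => e8 end
 | e9 => match b with e0 => e32 | e1 => e32 | e2 => e32 | e3 => e32 | e4 => e32 | e5 => e32 | e6 => e32 | e7 => e32 | e8 => e32 | e9 => e9 | e10 => e32 | e11 => e32 | e12 => e32 | e13 => e32 | e14 => e32 | e15 => e32 | e16 => e32 | e17 => e32 | e18 => e32 | e19 => e32 | e20 => e32 | e21 => e32 | e22 => e32 | e23 => e9 | e24 => e32 | e25 => e32 | e26 => e32 | e27 => e32 | e28 => e9 | e29 => e9 | e30 => e32 | e31 => e9 | e32 => e32 | e33 => e9 end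
 | e10 => match b with e0 => e32 | e1 => e32 | e2 => e32 | e3 => e32 | e4 => e32 | e5 => e32 | e6 => e32 | e7 => e32 | e8 => e32 | e9 => e32 | e10 => e10 | e11 => e32 | e12 => e32 | e13 => e32 | e14 => e32 | e15 => e32 | e16 => e32 | e17 => e32 | e18 => e32 | e19 => e32 | e20 => e10 | e21 => e32 | e22 => e32 | e23 => e32 | e24 => e32 | e25 => e32 | e26 => e32 | e27 => e32 | e28 => e32 | e29 => e32 | e30 => e32 | e31 => e10 | e32 => e32 | e33 => e10 end
 | e11 => match b with e0 => e32 | e1 => e32 | e2 => e32 | e3 => e32 | e4 => e32 | e5 => e32 | e6 => e32 | e7 => e32 | e8 => e32 | e9 => e32 | e10 => e32 | e11 => e11 | e12 => e32 | e13 => e32 | e14 => e32 | e15 => e32 | e16 => e32 | e17 => e32 | e18 => e11 | e19 => e32 | e20 => e32 | e21 => e11 | e22 => e32 | e23 => e32 | e24 => e32 | e25 => e32 | e26 => e32 | e27 => e32 | e28 => e11 | e29 => e32 | e30 => e11 | e31 => e32 | e32 => e32 | e33 => e11 end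
 | e12 => match b with e0 => e32 | e1 => e32 | e2 => e32 | e3 => e32 | e4 => e32 | e5 => e32 | e6 => e32 | e7 => e32 | e8 => e32 | e9 => e32 | e10 => e32 | e11 => e32 | e12 => e12 | e13 => e32 | e14 => e32 | e15 => e32 | e16 => e32 | e17 => e32 | e18 => e32 | e19 => e32 | e20 => e32 | e21 => e32 | e22 => e32 | e23 => e12 | e24 => e32 | e25 => e12 | e26 => e32 | e27 => e12 | e28 => e32 | e29 => e32 | e30 => e12 | e31 => e32 | e32 => e32 | e33 => e12 end
 | e13 => match b with e0 => e32 | e1 => e32 | e2 => e32 | e3 => e32 | e4 => e32 | e5 => e32 | e6 => e32 | e7 => e32 | e8 => e32 | e9 => e32 | e10 => e32 | e11 => e32 | e12 => e32 | e13 => e13 | e14 => e32 | e15 => e32 | e16 => e32 | e17 => e32 | e18 => e32 | e19 => e32 | e20 => e32 | e21 => e32 | e22 => e32 | e23 => e32 | e24 => e32 | e25 => e13 | e26 => e32 | e27 => e32 | e28 => e32 | e29 => e32 | e30 => e32 | e31 => e13 | e32 => e32 | e33 => e13 end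
 | e14 => match b with e0 => e32 | e1 => e32 | e2 => e32 | e3 => e32 | e4 => e32 | e5 => e32 | e6 => e32 | e7 => e32 | e8 => e32 | e9 => e32 | e10 => e32 | e11 => e32 | e12 => e32 | e13 => e32 | e14 => e14 | e15 => e32 | e16 => e32 | e17 => e32 | e18 => e32 | e19 => e32 | e20 => e32 | e21 => e32 | e22 => e32 | e23 => e32 | e24 => e32 | e25 => e32 | e26 => e32 | e27 => e14 | e28 => e14 | e29 => e32 | e30 => e32 | e31 => e32 | e32 => e32 | e33 => e14 end
 | e15 => match b with e0 => e32 | e1 => e32 | e2 => e32 | e3 => e32 | e4 => e32 | e5 => e32 | e6 => e32 | e7 => e32 | e8 => e32 | e9 => e32 | e10 => e32 | e11 => e32 | e12 => e32 | e13 => e32 | e14 => e32 | e15 => e15 | e16 => e32 | e17 => e32 | e18 => e32 | e19 => e15 | e20 => e15 | e21 => e15 | e22 => e32 | e23 => e32 | e24 => e32 | e25 => e15 | e26 => e15 | e27 => e32 | e28 => e32 | e29 => e15 | e30 => e32 | e31 => e32 | e32 => e32 | e33 => e15 end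
 | e16 => match b with e0 => e32 | e1 => e1 | e2 => e2 | e3 => e32 | e4 => e4 | e5 => e32 | e6 => e6 | e7 => e32 | e8 => e32 | e9 => e32 | e10 => e32 | e11 => e32 | e12 => e32 | e13 => e32 | e14 => e32 | e15 => e32 | e16 => e16 | e17 => e2 | e18 => e1 | e19 => e32 | e20 => e6 | e21 => e2 | e22 => e4 | e23 => e6 | e24 => e6 | e25 => e32 | e26 => e4 | e27 => e2 | e28 => e32 | e29 => e32 | e30 => e32 | e31 => e4 | e32 => e32 | e33 => e16 end
 | e17 => match b with e0 => e0 | e1 => e32 | e2 => e2 | e3 => e32 | e4 => e32 | e5 => e32 | e6 => e32 | e7 => e32 | e8 => e32 | e9 => e32 | e10 => e32 | e11 => e32 | e12 => e32 | e13 => e32 | e14 => e32 | e15 => e32 | e16 => e2 | e17 => e17 | e18 => e0 | e19 => e32 | e20 => e0 | e21 => e2 | e22 => e0 | e23 => e32 | e24 => e32 | e25 => e32 | e26 => e32 | e27 => e2 | e28 => e32 | e29 => e32 | e30 => e32 | e31 => e32 | e32 => e32 | e33 => e17 end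
 | e18 => match b with e0 => e0 | e1 => e1 | e2 => e32 | e3 => e32 | e4 => e32 | e5 => e5 | e6 => e32 | e7 => e32 | e8 => e32 | e9 => e32 | e10 => e32 | e11 => e11 | e12 => e32 | e13 => e32 | e14 => e32 | e15 => e32 | e16 => e1 | e17 => e0 | e18 => e18 | e19 => e5 | e20 => e0 | e21 => e11 | e22 => e0 | e23 => e32 | e24 => e32 | e25 => e32 | e26 => e32 | e27 => e5 | e28 => e11 | e29 => e32 | e30 => e11 | e31 => e5 | e32 => e32 | e33 => e18 end
 | e19 => match b with e0 => e32 | e1 => e32 | e2 => e32 | e3 => e32 | e4 => e32 | e5 => e5 | e6 => e32 | e7 => e32 | e8 => e32 | e9 => e32 | e10 => e32 | e11 => e32 | e12 => e32 | e13 => e32 | e14 => e32 | e15 => e15 | e16 => e32 | e17 => e32 | e18 => e5 | e19 => e19 | e20 => e15 | e21 => e15 | e22 => e32 | e23 => e32 | e24 => e32 | e25 => e15 | e26 => e15 | e27 => e5 | e28 => e32 | e29 => e15 | e30 => e32 | e31 => e5 | e32 => e32 | e33 => e19 end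
 | e20 => match b with e0 => e0 | e1 => e32 | e2 => e32 | e3 => e32 | e4 => e32 | e5 => e32 | e6 => e6 | e7 => e32 | e8 => e32 | e9 => e32 | e10 => e10 | e11 => e32 | e12 => e32 | e13 => e32 | e14 => e32 | e15 => e15 | e16 => e6 | e17 => e0 | e18 => e0 | e19 => e15 | e20 => e20 | e21 => e15 | e22 => e0 | e23 => e6 | e24 => e6 | e25 => e15 | e26 => e15 | e27 => e32 | e28 => e32 | e29 => e15 | e30 => e32 | e31 => e10 | e32 => e32 | e33 => e20 end
 | e21 => match b with e0 => e32 | e1 => e32 | e2 => e2 | e3 => e3 | e4 => e32 | e5 => e32 | e6 => e32 | e7 => e32 | e8 => e32 | e9 => e32 | e10 => e32 | e11 => e11 | e12 => e32 | e13 => e32 | e14 => e32 | e15 => e15 | e16 => e2 | e17 => e2 | e18 => e11 | e19 => e15 | e20 => e15 | e21 => e21 | e22 => e32 | e23 => e32 | e24 => e32 | e25 => e15 | e26 => e15 | e27 => e2 | e28 => e11 | e29 => e15 | e30 => e11 | e31 => e3 | e32 => e32 | e33 => e21 end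
 | e22 => match b with e0 => e0 | e1 => e32 | e2 => e32 | e3 => e32 | e4 => e4 | e5 => e32 | e6 => e32 | e7 => e7 | e8 => e8 | e9 => e32 | e10 => e32 | e11 => e32 | e12 => e32 | e13 => e32 | e14 => e32 | e15 => e32 | e16 => e4 | e17 => e0 | e18 => e0 | e19 => e32 | e20 => e0 | e21 => e32 | e22 => e22 | e23 => e8 | e24 => e7 | e25 => e7 | e26 => e4 | e27 => e32 | e28 => e7 | e29 => e32 | e30 => e32 | e31 => e4 | e32 => e32 | e33 => e22 end
 | e23 => match b with e0 => e32 | e1 => e32 | e2 => e32 | e3 => e32 | e4 => e32 | e5 => e32 | e6 => e6 | e7 => e32 | e8 => e8 | e9 => e9 | e10 => e32 | e11 => e32 | e12 => e12 | e13 => e32 | e14 => e32 | e15 => e32 | e16 => e6 | e17 => e32 | e18 => e32 | e19 => e32 | e20 => e6 | e21 => e32 | e22 => e8 | e23 => e23 | e24 => e6 | e25 => e12 | e26 => e32 | e27 => e12 | e28 => e9 | e29 => e9 | e30 => e12 | e31 => e9 | e32 => e32 | e33 => e23 end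
 | e24 => match b with e0 => e32 | e1 => e32 | e2 => e32 | e3 => e32 | e4 => e32 | e5 => e32 | e6 => e6 | e7 => e7 | e8 => e32 | e9 => e32 | e10 => e32 | e11 => e32 | e12 => e32 | e13 => e32 | e14 => e32 | e15 => e32 | e16 => e6 | e17 => e32 | e18 => e32 | e19 => e32 | e20 => e6 | e21 => e32 | e22 => e7 | e23 => e6 | e24 => e24 | e25 => e7 | e26 => e32 | e27 => e32 | e28 => e7 | e29 => e32 | e30 => e32 | e31 => e32 | e32 => e32 | e33 => e24 end
 | e25 => match b with e0 => e32 | e1 => e32 | e2 => e32 | e3 => e32 | e4 => e32 | e5 => e32 | e6 => e32 | e7 => e7 | e8 => e32 | e9 => e32 | e10 => e32 | e11 => e32 | e12 => e12 | e13 => e13 | e14 => e32 | e15 => e15 | e16 => e32 | e17 => e32 | e18 => e32 | e19 => e15 | e20 => e15 | e21 => e15 | e22 => e7 | e23 => e12 | e24 => e7 | e25 => e25 | e26 => e15 | e27 => e12 | e28 => e7 | e29 => e15 | e30 => e12 | e31 => e13 | e32 => e32 | e33 => e25 end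
 | e26 => match b with e0 => e32 | e1 => e32 | e2 => e32 | e3 => e32 | e4 => e4 | e5 => e32 | e6 => e32 | e7 => e32 | e8 => e32 | e9 => e32 | e10 => e32 | e11 => e32 | e12 => e32 | e13 => e32 | e14 => e32 | e15 => e15 | e16 => e4 | e17 => e32 | e18 => e32 | e19 => e15 | e20 => e15 | e21 => e15 | e22 => e4 | e23 => e32 | e24 => e32 | e25 => e15 | e26 => e26 | e27 => e32 | e28 => e32 | e29 => e15 | e30 => e32 | e31 => e4 | e32 => e32 | e33 => e26 end
 | e27 => match b with e0 => e32 | e1 => e32 | e2 => e2 | e3 => e32 | e4 => e32 | e5 => e5 | e6 => e32 | e7 => e32 | e8 => e32 | e9 => e32 | e10 => e32 | e11 => e32 | e12 => e12 | e13 => e32 | e14 => e14 | e15 => e32 | e16 => e2 | e17 => e2 | e18 => e5 | e19 => e5 | e20 => e32 | e21 => e2 | e22 => e32 | e23 => e12 | e24 => e32 | e25 => e12 | e26 => e32 | e27 => e27 | e28 => e14 | e29 => e32 | e30 => e12 | e31 => e5 | e32 => e32 | e33 => e27 end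
 | e28 => match b with e0 => e32 | e1 => e32 | e2 => e32 | e3 => e32 | e4 => e32 | e5 => e32 | e6 => e32 | e7 => e7 | e8 => e32 | e9 => e9 | e10 => e32 | e11 => e11 | e12 => e32 | e13 => e32 | e14 => e14 | e15 => e32 | e16 => e32 | e17 => e32 | e18 => e11 | e19 => e32 | e20 => e32 | e21 => e11 | e22 => e7 | e23 => e9 | e24 => e7 | e25 => e7 | e26 => e32 | e27 => e14 | e28 => e28 | e29 => e9 | e30 => e11 | e31 => e9 | e32 => e32 | e33 => e28 end
 | e29 => match b with e0 => e32 | e1 => e32 | e2 => e32 | e3 => e32 | e4 => e32 | e5 => e32 | e6 => e32 | e7 => e32 | e8 => e32 | e9 => e9 | e10 => e32 | e11 => e32 | e12 => e32 | e13 => e32 | e14 => e32 | e15 => e15 | e16 => e32 | e17 => e32 | e18 => e32 | e19 => e15 | e20 => e15 | e21 => e15 | e22 => e32 | e23 => e9 | e24 => e32 | e25 => e15 | e26 => e15 | e27 => e32 | e28 => e9 | e29 => e29 | e30 => e32 | e31 => e9 | e32 => e32 | e33 => e29 end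
 | e30 => match b with e0 => e32 | e1 => e32 | e2 => e32 | e3 => e32 | e4 => e32 | e5 => e32 | e6 => e32 | e7 => e32 | e8 => e32 | e9 => e32 | e10 => e32 | e11 => e11 | e12 => e12 | e13 => e32 | e14 => e32 | e15 => e32 | e16 => e32 | e17 => e32 | e18 => e11 | e19 => e32 | e20 => e32 | e21 => e11 | e22 => e32 | e23 => e12 | e24 => e32 | e25 => e12 | e26 => e32 | e27 => e12 | e28 => e11 | e29 => e32 | e30 => e30 | e31 => e32 | e32 => e32 | e33 => e30 end
 | e31 => match b with e0 => e32 | e1 => e32 | e2 => e32 | e3 => e3 | e4 => e4 | e5 => e5 | e6 => e32 | e7 => e32 | e8 => e32 | e9 => e9 | e10 => e10 | e11 => e32 | e12 => e32 | e13 => e13 | e14 => e32 | e15 => e32 | e16 => e4 | e17 => e32 | e18 => e5 | e19 => e5 | e20 => e10 | e21 => e3 | e22 => e4 | e23 => e9 | e24 => e32 | e25 => e13 | e26 => e4 | e27 => e5 | e28 => e9 | e29 => e9 | e30 => e32 | e31 => e31 | e32 => e32 | e33 => e31 end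
 | e32 => match b with e0 => e32 | e1 => e32 | e2 => e32 | e3 => e32 | e4 => e32 | e5 => e32 | e6 => e32 | e7 => e32 | e8 => e32 | e9 => e32 | e10 => e32 | e11 => e32 | e12 => e32 | e13 => e32 | e14 => e32 | e15 => e32 | e16 => e32 | e17 => e32 | e18 => e32 | e19 => e32 | e20 => e32 | e21 => e32 | e22 => e32 | e23 => e32 | e24 => e32 | e25 => e32 | e26 => e32 | e27 => e32 | e28 => e32 | e29 => e32 | e30 => e32 | e31 => e32 | e32 => e32 | e33 => e32 end
 | e33 => match b with e0 => e0 | e1 => e1 | e2 => e2 | e3 => e3 | e4 => e4 | e5 => e5 | e6 => e6 | e7 => e7 | e8 => e8 | e9 => e9 | e10 => e10 | e11 => e11 | e12 => e12 | e13 => e13 | e14 => e14 | e15 => e15 | e16 => e16 | e17 => e17 | e18 => e18 | e19 => e19 | e20 => e20 | e21 => e21 | e22 => e22 | e23 => e23 | e24 => e24 | e25 => e25 | e26 => e26 | e27 => e27 | e28 => e28 | e29 => e29 | e30 => e30 | e31 => e31 | e32 => e32 | e33 => e33 end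
 end.
Definition joinE (a b : E) : E := match a with
 | e0 => match b with e0 => e0 | e1 => e18 | e2 => e17 | e3 => e33 | e4 => e22 | e5 => e18 | e6 => e20 | e7 => e22 | e8 => e22 | e9 => e33 | e10 => e20 | e11 => e18 | e12 => e33 | e13 => e33 | e14 => e33 | e15 => e20 | e16 => e33 | e17 => e17 | e18 => e18 | e19 => e33 | e20 => e20 | e21 => e33 | e22 => e22 | e23 => e33 | e24 => e33 | e25 => e33 | e26 => e33 | e27 => e33 | e28 => e33 | e29 => e33 | e30 => e33 | e31 => e33 | e32 => e0 | e33 => e33 end
 | e1 => match b with e0 => e18 | e1 => e1 | e2 => e16 | e3 => e33 | e4 => e16 | e5 => e18 | e6 => e16 | e7 => e33 | e8 => e33 | e9 => e33 | e10 => e33 | e11 => e18 | e12 => e33 | e13 => e33 | e14 => e33 | e15 => e33 | e16 => e16 | e17 => e33 | e18 => e18 | e19 => e33 | e20 => e33 | e21 => e33 | e22 => e33 | e23 => e33 | e24 => e33 | e25 => e33 | e26 => e33 | e27 => e33 | e28 => e33 | e29 => e33 | e30 => e33 | e31 => e33 | e32 => e1 | e33 => e33 end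
 | e2 => match b with e0 => e17 | e1 => e16 | e2 => e2 | e3 => e21 | e4 => e16 | e5 => e27 | e6 => e16 | e7 => e33 | e8 => e33 | e9 => e33 | e10 => e33 | e11 => e21 | e12 => e27 | e13 => e33 | e14 => e27 | e15 => e21 | e16 => e16 | e17 => e17 | e18 => e33 | e19 => e33 | e20 => e33 | e21 => e21 | e22 => e33 | e23 => e33 | e24 => e33 | e25 => e33 | e26 => e33 | e27 => e27 | e28 => e33 | e29 => e33 | e30 => e33 | e31 => e33 | e32 => e2 | e33 => e33 end
 | e3 => match b with e0 => e33 | e1 => e33 | e2 => e21 | e3 => e3 | e4 => e31 | e5 => e31 | e6 => e33 | e7 => e33 | e8 => e33 | e9 => e31 | e10 => e31 | e11 => e21 | e12 => e33 | e13 => e31 | e14 => e33 | e15 => e21 | e16 => e33 | e17 => e33 | e18 => e33 | e19 => e33 | e20 => e33 | e21 => e21 | e22 => e33 | e23 => e33 | e24 => e33 | e25 => e33 | e26 => e33 | e27 => e33 | e28 => e33 | e29 => e33 | e30 => e33 | e31 => e31 | e32 => e3 | e33 => e33 end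
 | e4 => match b with e0 => e22 | e1 => e16 | e2 => e16 | e3 => e31 | e4 => e4 | e5 => e31 | e6 => e16 | e7 => e22 | e8 => e22 | e9 => e31 | e10 => e31 | e11 => e33 | e12 => e33 | e13 => e31 | e14 => e33 | e15 => e26 | e16 => e16 | e17 => e33 | e18 => e33 | e19 => e33 | e20 => e33 | e21 => e33 | e22 => e22 | e23 => e33 | e24 => e33 | e25 => e33 | e26 => e26 | e27 => e33 | e28 => e33 | e29 => e33 | e30 => e33 | e31 => e31 | e32 => e4 | e33 => e33 end
 | e5 => match b with e0 => e18 | e1 => e18 | e2 => e27 | e3 => e31 | e4 => e31 | e5 => e5 | e6 => e33 | e7 => e33 | e8 => e33 | e9 => e31 | e10 => e31 | e11 => e18 | e12 => e27 | e13 => e31 | e14 => e27 | e15 => e19 | e16 => e33 | e17 => e33 | e18 => e18 | e19 => e19 | e20 => e33 | e21 => e33 | e22 => e33 | e23 => e33 | e24 => e33 | e25 => e33 | e26 => e33 | e27 => e27 | e28 => e33 | e29 => e33 | e30 => e33 | e31 => e31 | e32 => e5 | e33 => e33 end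
 | e6 => match b with e0 => e20 | e1 => e16 | e2 => e16 | e3 => e33 | e4 => e16 | e5 => e33 | e6 => e6 | e7 => e24 | e8 => e23 | e9 => e23 | e10 => e20 | e11 => e33 | e12 => e23 | e13 => e33 | e14 => e33 | e15 => e20 | e16 => e16 | e17 => e33 | e18 => e33 | e19 => e33 | e20 => e20 | e21 => e33 | e22 => e33 | e23 => e23 | e24 => e24 | e25 => e33 | e26 => e33 | e27 => e33 | e28 => e33 | e29 => e33 | e30 => e33 | e31 => e33 | e32 => e6 | e33 => e33 end
 | e7 => match b with e0 => e22 | e1 => e33 | e2 => e33 | e3 => e33 | e4 => e22 | e5 => e33 | e6 => e24 | e7 => e7 | e8 => e22 | e9 => e28 | e10 => e33 | e11 => e28 | e12 => e25 | e13 => e25 | e14 => e28 | e15 => e25 | e16 => e33 | e17 => e33 | e18 => e33 | e19 => e33 | e20 => e33 | e21 => e33 | e22 => e22 | e23 => e33 | e24 => e24 | e25 => e25 | e26 => e33 | e27 => e33 | e28 => e28 | e29 => e33 | e30 => e33 | e31 => e33 | e32 => e7 | e33 => e33 end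
 | e8 => match b with e0 => e22 | e1 => e33 | e2 => e33 | e3 => e33 | e4 => e22 | e5 => e33 | e6 => e23 | e7 => e22 | e8 => e8 | e9 => e23 | e10 => e33 | e11 => e33 | e12 => e23 | e13 => e33 | e14 => e33 | e15 => e33 | e16 => e33 | e17 => e33 | e18 => e33 | e19 => e33 | e20 => e33 | e21 => e33 | e22 => e22 | e23 => e23 | e24 => e33 | e25 => e33 | e26 => e33 | e27 => e33 | e28 => e33 | e29 => e33 | e30 => e33 | e31 => e33 | e32 => e8 | e33 => e33 end
 | e9 => match b with e0 => e33 | e1 => e33 | e2 => e33 | e3 => e31 | e4 => e31 | e5 => e31 | e6 => e23 | e7 => e28 | e8 => e23 | e9 => e9 | e10 => e31 | e11 => e28 | e12 => e23 | e13 => e31 | e14 => e28 | e15 => e29 | e16 => e33 | e17 => e33 | e18 => e33 | e19 => e33 | e20 => e33 | e21 => e33 | e22 => e33 | e23 => e23 | e24 => e33 | e25 => e33 | e26 => e33 | e27 => e33 | e28 => e28 | e29 => e29 | e30 => e33 | e31 => e31 | e32 => e9 | e33 => e33 end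
 | e10 => match b with e0 => e20 | e1 => e33 | e2 => e33 | e3 => e31 | e4 => e31 | e5 => e31 | e6 => e20 | e7 => e33 | e8 => e33 | e9 => e31 | e10 => e10 | e11 => e33 | e12 => e33 | e13 => e31 | e14 => e33 | e15 => e20 | e16 => e33 | e17 => e33 | e18 => e33 | e19 => e33 | e20 => e20 | e21 => e33 | e22 => e33 | e23 => e33 | e24 => e33 | e25 => e33 | e26 => e33 | e27 => e33 | e28 => e33 | e29 => e33 | e30 => e33 | e31 => e31 | e32 => e10 | e33 => e33 end
 | e11 => match b with e0 => e18 | e1 => e18 | e2 => e21 | e3 => e21 | e4 => e33 | e5 => e18 | e6 => e33 | e7 => e28 | e8 => e33 | e9 => e28 | e10 => e33 | e11 => e11 | e12 => e30 | e13 => e33 | e14 => e28 | e15 => e21 | e16 => e33 | e17 => e33 | e18 => e18 | e19 => e33 | e20 => e33 | e21 => e21 | e22 => e33 | e23 => e33 | e24 => e33 | e25 => e33 | e26 => e33 | e27 => e33 | e28 => e28 | e29 => e33 | e30 => e30 | e31 => e33 | e32 => e11 | e33 => e33 end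
 | e12 => match b with e0 => e33 | e1 => e33 | e2 => e27 | e3 => e33 | e4 => e33 | e5 => e27 | e6 => e23 | e7 => e25 | e8 => e23 | e9 => e23 | e10 => e33 | e11 => e30 | e12 => e12 | e13 => e25 | e14 => e27 | e15 => e25 | e16 => e33 | e17 => e33 | e18 => e33 | e19 => e33 | e20 => e33 | e21 => e33 | e22 => e33 | e23 => e23 | e24 => e33 | e25 => e25 | e26 => e33 | e27 => e27 | e28 => e33 | e29 => e33 | e30 => e30 | e31 => e33 | e32 => e12 | e33 => e33 end
 | e13 => match b with e0 => e33 | e1 => e33 | e2 => e33 | e3 => e31 | e4 => e31 | e5 => e31 | e6 => e33 | e7 => e25 | e8 => e33 | e9 => e31 | e10 => e31 | e11 => e33 | e12 => e25 | e13 => e13 | e14 => e33 | e15 => e25 | e16 => e33 | e17 => e33 | e18 => e33 | e19 => e33 | e20 => e33 | e21 => e33 | e22 => e33 | e23 => e33 | e24 => e33 | e25 => e25 | e26 => e33 | e27 => e33 | e28 => e33 | e29 => e33 | e30 => e33 | e31 => e31 | e32 => e13 | e33 => e33 end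
 | e14 => match b with e0 => e33 | e1 => e33 | e2 => e27 | e3 => e33 | e4 => e33 | e5 => e27 | e6 => e33 | e7 => e28 | e8 => e33 | e9 => e28 | e10 => e33 | e11 => e28 | e12 => e27 | e13 => e33 | e14 => e14 | e15 => e33 | e16 => e33 | e17 => e33 | e18 => e33 | e19 => e33 | e20 => e33 | e21 => e33 | e22 => e33 | e23 => e33 | e24 => e33 | e25 => e33 | e26 => e33 | e27 => e27 | e28 => e28 | e29 => e33 | e30 => e33 | e31 => e33 | e32 => e14 | e33 => e33 end
 | e15 => match b with e0 => e20 | e1 => e33 | e2 => e21 | e3 => e21 | e4 => e26 | e5 => e19 | e6 => e20 | e7 => e25 | e8 => e33 | e9 => e29 | e10 => e20 | e11 => e21 | e12 => e25 | e13 => e25 | e14 => e33 | e15 => e15 | e16 => e33 | e17 => e33 | e18 => e33 | e19 => e19 | e20 => e20 | e21 => e21 | e22 => e33 | e23 => e33 | e24 => e33 | e25 => e25 | e26 => e26 | e27 => e33 | e28 => e33 | e29 => e29 | e30 => e33 | e31 => e33 | e32 => e15 | e33 => e33 end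
 | e16 => match b with e0 => e33 | e1 => e16 | e2 => e16 | e3 => e33 | e4 => e16 | e5 => e33 | e6 => e16 | e7 => e33 | e8 => e33 | e9 => e33 | e10 => e33 | e11 => e33 | e12 => e33 | e13 => e33 | e14 => e33 | e15 => e33 | e16 => e16 | e17 => e33 | e18 => e33 | e19 => e33 | e20 => e33 | e21 => e33 | e22 => e33 | e23 => e33 | e24 => e33 | e25 => e33 | e26 => e33 | e27 => e33 | e28 => e33 | e29 => e33 | e30 => e33 | e31 => e33 | e32 => e16 | e33 => e33 end
 | e17 => match b with e0 => e17 | e1 => e33 | e2 => e17 | e3 => e33 | e4 => e33 | e5 => e33 | e6 => e33 | e7 => e33 | e8 => e33 | e9 => e33 | e10 => e33 | e11 => e33 | e12 => e33 | e13 => e33 | e14 => e33 | e15 => e33 | e16 => e33 | e17 => e17 | e18 => e33 | e19 => e33 | e20 => e33 | e21 => e33 | e22 => e33 | e23 => e33 | e24 => e33 | e25 => e33 | e26 => e33 | e27 => e33 | e28 => e33 | e29 => e33 | e30 => e33 | e31 => e33 | e32 => e17 | e33 => e33 end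
 | e18 => match b with e0 => e18 | e1 => e18 | e2 => e33 | e3 => e33 | e4 => e33 | e5 => e18 | e6 => e33 | e7 => e33 | e8 => e33 | e9 => e33 | e10 => e33 | e11 => e18 | e12 => e33 | e13 => e33 | e14 => e33 | e15 => e33 | e16 => e33 | e17 => e33 | e18 => e18 | e19 => e33 | e20 => e33 | e21 => e33 | e22 => e33 | e23 => e33 | e24 => e33 | e25 => e33 | e26 => e33 | e27 => e33 | e28 => e33 | e29 => e33 | e30 => e33 | e31 => e33 | e32 => e18 | e33 => e33 end
 | e19 => match b with e0 => e33 | e1 => e33 | e2 => e33 | e3 => e33 | e4 => e33 | e5 => e19 | e6 => e33 | e7 => e33 | e8 => e33 | e9 => e33 | e10 => e33 | e11 => e33 | e12 => e33 | e13 => e33 | e14 => e33 | e15 => e19 | e16 => e33 | e17 => e33 | e18 => e33 | e19 => e19 | e20 => e33 | e21 => e33 | e22 => e33 | e23 => e33 | e24 => e33 | e25 => e33 | e26 => e33 | e27 => e33 | e28 => e33 | e29 => e33 | e30 => e33 | e31 => e33 | e32 => e19 | e33 => e33 end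
 | e20 => match b with e0 => e20 | e1 => e33 | e2 => e33 | e3 => e33 | e4 => e33 | e5 => e33 | e6 => e20 | e7 => e33 | e8 => e33 | e9 => e33 | e10 => e20 | e11 => e33 | e12 => e33 | e13 => e33 | e14 => e33 | e15 => e20 | e16 => e33 | e17 => e33 | e18 => e33 | e19 => e33 | e20 => e20 | e21 => e33 | e22 => e33 | e23 => e33 | e24 => e33 | e25 => e33 | e26 => e33 | e27 => e33 | e28 => e33 | e29 => e33 | e30 => e33 | e31 => e33 | e32 => e20 | e33 => e33 end
 | e21 => match b with e0 => e33 | e1 => e33 | e2 => e21 | e3 => e21 | e4 => e33 | e5 => e33 | e6 => e33 | e7 => e33 | e8 => e33 | e9 => e33 | e10 => e33 | e11 => e21 | e12 => e33 | e13 => e33 | e14 => e33 | e15 => e21 | e16 => e33 | e17 => e33 | e18 => e33 | e19 => e33 | e20 => e33 | e21 => e21 | e22 => e33 | e23 => e33 | e24 => e33 | e25 => e33 | e26 => e33 | e27 => e33 | e28 => e33 | e29 => e33 | e30 => e33 | e31 => e33 | e32 => e21 | e33 => e33 end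
 | e22 => match b with e0 => e22 | e1 => e33 | e2 => e33 | e3 => e33 | e4 => e22 | e5 => e33 | e6 => e33 | e7 => e22 | e8 => e22 | e9 => e33 | e10 => e33 | e11 => e33 | e12 => e33 | e13 => e33 | e14 => e33 | e15 => e33 | e16 => e33 | e17 => e33 | e18 => e33 | e19 => e33 | e20 => e33 | e21 => e33 | e22 => e22 | e23 => e33 | e24 => e33 | e25 => e33 | e26 => e33 | e27 => e33 | e28 => e33 | e29 => e33 | e30 => e33 | e31 => e33 | e32 => e22 | e33 => e33 end
 | e23 => match b with e0 => e33 | e1 => e33 | e2 => e33 | e3 => e33 | e4 => e33 | e5 => e33 | e6 => e23 | e7 => e33 | e8 => e23 | e9 => e23 | e10 => e33 | e11 => e33 | e12 => e23 | e13 => e33 | e14 => e33 | e15 => e33 | e16 => e33 | e17 => e33 | e18 => e33 | e19 => e33 | e20 => e33 | e21 => e33 | e22 => e33 | e23 => e23 | e24 => e33 | e25 => e33 | e26 => e33 | e27 => e33 | e28 => e33 | e29 => e33 | e30 => e33 | e31 => e33 | e32 => e23 | e33 => e33 end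
 | e24 => match b with e0 => e33 | e1 => e33 | e2 => e33 | e3 => e33 | e4 => e33 | e5 => e33 | e6 => e24 | e7 => e24 | e8 => e33 | e9 => e33 | e10 => e33 | e11 => e33 | e12 => e33 | e13 => e33 | e14 => e33 | e15 => e33 | e16 => e33 | e17 => e33 | e18 => e33 | e19 => e33 | e20 => e33 | e21 => e33 | e22 => e33 | e23 => e33 | e24 => e24 | e25 => e33 | e26 => e33 | e27 => e33 | e28 => e33 | e29 => e33 | e30 => e33 | e31 => e33 | e32 => e24 | e33 => e33 end
 | e25 => match b with e0 => e33 | e1 => e33 | e2 => e33 | e3 => e33 | e4 => e33 | e5 => e33 | e6 => e33 | e7 => e25 | e8 => e33 | e9 => e33 | e10 => e33 | e11 => e33 | e12 => e25 | e13 => e25 | e14 => e33 | e15 => e25 | e16 => e33 | e17 => e33 | e18 => e33 | e19 => e33 | e20 => e33 | e21 => e33 | e22 => e33 | e23 => e33 | e24 => e33 | e25 => e25 | e26 => e33 | e27 => e33 | e28 => e33 | e29 => e33 | e30 => e33 | e31 => e33 | e32 => e25 | e33 => e33 end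
 | e26 => match b with e0 => e33 | e1 => e33 | e2 => e33 | e3 => e33 | e4 => e26 | e5 => e33 | e6 => e33 | e7 => e33 | e8 => e33 | e9 => e33 | e10 => e33 | e11 => e33 | e12 => e33 | e13 => e33 | e14 => e33 | e15 => e26 | e16 => e33 | e17 => e33 | e18 => e33 | e19 => e33 | e20 => e33 | e21 => e33 | e22 => e33 | e23 => e33 | e24 => e33 | e25 => e33 | e26 => e26 | e27 => e33 | e28 => e33 | e29 => e33 | e30 => e33 | e31 => e33 | e32 => e26 | e33 => e33 end
 | e27 => match b with e0 => e33 | e1 => e33 | e2 => e27 | e3 => e33 | e4 => e33 | e5 => e27 | e6 => e33 | e7 => e33 | e8 => e33 | e9 => e33 | e10 => e33 | e11 => e33 | e12 => e27 | e13 => e33 | e14 => e27 | e15 => e33 | e16 => e33 | e17 => e33 | e18 => e33 | e19 => e33 | e20 => e33 | e21 => e33 | e22 => e33 | e23 => e33 | e24 => e33 | e25 => e33 | e26 => e33 | e27 => e27 | e28 => e33 | e29 => e33 | e30 => e33 | e31 => e33 | e32 => e27 | e33 => e33 end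
 | e28 => match b with e0 => e33 | e1 => e33 | e2 => e33 | e3 => e33 | e4 => e33 | e5 => e33 | e6 => e33 | e7 => e28 | e8 => e33 | e9 => e28 | e10 => e33 | e11 => e28 | e12 => e33 | e13 => e33 | e14 => e28 | e15 => e33 | e16 => e33 | e17 => e33 | e18 => e33 | e19 => e33 | e20 => e33 | e21 => e33 | e22 => e33 | e23 => e33 | e24 => e33 | e25 => e33 | e26 => e33 | e27 => e33 | e28 => e28 | e29 => e33 | e30 => e33 | e31 => e33 | e32 => e28 | e33 => e33 end
 | e29 => match b with e0 => e33 | e1 => e33 | e2 => e33 | e3 => e33 | e4 => e33 | e5 => e33 | e6 => e33 | e7 => e33 | e8 => e33 | e9 => e29 | e10 => e33 | e11 => e33 | e12 => e33 | e13 => e33 | e14 => e33 | e15 => e29 | e16 => e33 | e17 => e33 | e18 => e33 | e19 => e33 | e20 => e33 | e21 => e33 | e22 => e33 | e23 => e33 | e24 => e33 | e25 => e33 | e26 => e33 | e27 => e33 | e28 => e33 | e29 => e29 | e30 => e33 | e31 => e33 | e32 => e29 | e33 => e33 end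
 | e30 => match b with e0 => e33 | e1 => e33 | e2 => e33 | e3 => e33 | e4 => e33 | e5 => e33 | e6 => e33 | e7 => e33 | e8 => e33 | e9 => e33 | e10 => e33 | e11 => e30 | e12 => e30 | e13 => e33 | e14 => e33 | e15 => e33 | e16 => e33 | e17 => e33 | e18 => e33 | e19 => e33 | e20 => e33 | e21 => e33 | e22 => e33 | e23 => e33 | e24 => e33 | e25 => e33 | e26 => e33 | e27 => e33 | e28 => e33 | e29 => e33 | e30 => e30 | e31 => e33 | e32 => e30 | e33 => e33 end
 | e31 => match b with e0 => e33 | e1 => e33 | e2 => e33 | e3 => e31 | e4 => e31 | e5 => e31 | e6 => e33 | e7 => e33 | e8 => e33 | e9 => e31 | e10 => e31 | e11 => e33 | e12 => e33 | e13 => e31 | e14 => e33 | e15 => e33 | e16 => e33 | e17 => e33 | e18 => e33 | e19 => e33 | e20 => e33 | e21 => e33 | e22 => e33 | e23 => e33 | e24 => e33 | e25 => e33 | e26 => e33 | e27 => e33 | e28 => e33 | e29 => e33 | e30 => e33 | e31 => e31 | e32 => e31 | e33 => e33 end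
 | e32 => match b with e0 => e0 | e1 => e1 | e2 => e2 | e3 => e3 | e4 => e4 | e5 => e5 | e6 => e6 | e7 => e7 | e8 => e8 | e9 => e9 | e10 => e10 | e11 => e11 | e12 => e12 | e13 => e13 | e14 => e14 | e15 => e15 | e16 => e16 | e17 => e17 | e18 => e18 | e19 => e19 | e20 => e20 | e21 => e21 | e22 => e22 | e23 => e23 | e24 => e24 | e25 => e25 | e26 => e26 | e27 => e27 | e28 => e28 | e29 => e29 | e30 => e30 | e31 => e31 | e32 => e32 | e33 => e33 end
 | e33 => match b with e0 => e33 | e1 => e33 | e2 => e33 | e3 => e33 | e4 => e33 | e5 => e33 | e6 => e33 | e7 => e33 | e8 => e33 | e9 => e33 | e10 => e33 | e11 => e33 | e12 => e33 | e13 => e33 | e14 => e33 | e15 => e33 | e16 => e33 | e17 => e33 | e18 => e33 | e19 => e33 | e20 => e33 | e21 => e33 | e22 => e33 | e23 => e33 | e24 => e33 | e25 => e33 | e26 => e33 | e27 => e33 | e28 => e33 | e29 => e33 | e30 => e33 | e31 => e33 | e32 => e33 | e33 => e33 end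
 end.
Definition complE (a : E) : E := match a with e0 => e16 | e1 => e17 | e2 => e18 | e3 => e19 | e4 => e20 | e5 => e21 | e6 => e22 | e7 => e23 | e8 => e24 | e9 => e25 | e10 => e26 | e11 => e27 | e12 => e28 | e13 => e29 | e14 => e30 | e15 => e31 | e16 => e0 | e17 => e1 | e18 => e2 | e19 => e3 | e20 => e4 | e21 => e5 | e22 => e6 | e23 => e7 | e24 => e8 | e25 => e9 | e26 => e10 | e27 => e11 | e28 => e12 | e29 => e13 | e30 => e14 | e31 => e15 | e32 => e33 | e33 => e32 end.
Definition zeroE := e32.
Definition oneE := e33.

Lemma of_to (x : E) : of_nat (to_nat x) = x.
Proof. destruct x; reflexivity. Qed.

Definition eqbE (a b : E) : bool := Nat.eqb (to_nat a) (to_nat b).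

Lemma eqbE_true a b : eqbE a b = true -> a = b.
Proof.
  unfold eqbE. intro H. apply Nat.eqb_eq in H.
  rewrite <- (of_to a), <- (of_to b), H. reflexivity.
Qed.

Lemma eqbE_refl a : eqbE a a = true.
Proof. apply Nat.eqb_refl. Qed.

Lemma allE_in x : In x allE.
Proof. destruct x; simpl; tauto. Qed.

Lemma forall1 (P : E -> bool) : forallb P allE = true -> forall a, P a = true.
Proof. intros H a. rewrite forallb_forall in H. apply H, allE_in. Qed.

Lemma forall2 (P : E -> E -> bool) :
  forallb (fun a => forallb (P a) allE) allE = true -> forall a b, P a b = true.
Proof. intros H a. apply forall1. apply (forall1 _ H a). Qed.

Lemma forall3 (P : E -> E -> E -> bool) :
  forallb (fun a => forallb (fun b => forallb (P a b) allE) allE) allE = true ->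
  forall a b c, P a b c = true.
Proof. intros H a b. apply forall1. apply (forall2 _ H a b). Qed.

Lemma meetEC a b : meetE a b = meetE b a.
Proof.
  apply eqbE_true. apply (forall2 (fun a b => eqbE (meetE a b) (meetE b a))).
  vm_compute. reflexivity.
Qed.
Lemma joinEC a b : joinE a b = joinE b a.
Proof.
  apply eqbE_true. apply (forall2 (fun a b => eqbE (joinE a b) (joinE b a))).
  vm_compute. reflexivity.
Qed.
Lemma meetEA a b c : meetE a (meetE b c) = meetE (meetE a b) c.
Proof.
  apply eqbE_true.
  apply (forall3 (fun a b c => eqbE (meetE a (meetE b c)) (meetE (meetE a b) c))).
  vm_compute. reflexivity.
Qed.
Lemma joinEA a b c : joinE a (joinE b c) = joinE (joinE a b) c.
Proof.
  apply eqbE_true.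
  apply (forall3 (fun a b c => eqbE (joinE a (joinE b c)) (joinE (joinE a b) c))).
  vm_compute. reflexivity.
Qed.
Lemma meetE_abs a b : meetE a (joinE a b) = a.
Proof.
  apply eqbE_true. apply (forall2 (fun a b => eqbE (meetE a (joinE a b)) a)).
  vm_compute. reflexivity.
Qed.
Lemma joinE_abs a b : joinE a (meetE a b) = a.
Proof.
  apply eqbE_true. apply (forall2 (fun a b => eqbE (joinE a (meetE a b)) a)).
  vm_compute. reflexivity.
Qed.
Lemma meetE0 a : meetE zeroE a = zeroE.
Proof. apply eqbE_true. apply (forall1 (fun a => eqbE (meetE zeroE a) zeroE)).
  vm_compute. reflexivity. Qed.
Lemma joinE1 a : joinE oneE a = oneE.
Proof. apply eqbE_true. apply (forall1 (fun a => eqbE (joinE oneE a) oneE)).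
  vm_compute. reflexivity. Qed.
Lemma complEK a : complE (complE a) = a.
Proof. destruct a; reflexivity. Qed.
Lemma complE_anti a b : meetE a b = a -> meetE (complE b) (complE a) = complE b.
Proof.
  intro H. apply eqbE_true.
  assert (Hc := forall2 (fun a b => implb (eqbE (meetE a b) a)
    (eqbE (meetE (complE b) (complE a)) (complE b))) ltac:(vm_compute; reflexivity) a b).
  simpl in Hc. rewrite H, eqbE_refl in Hc. exact Hc.
Qed.
Lemma meetE_compl a : meetE a (complE a) = zeroE.
Proof. destruct a; reflexivity. Qed.
Lemma joinE_compl a : joinE a (complE a) = oneE.
Proof. destruct a; reflexivity. Qed.

Definition LE : OL := {|
  carrier := E; meet := meetE; join := joinE; compl := complE;
  zero := zeroE; one := oneE;
  meetC := meetEC; joinC := joinEC; meetA := meetEA; joinA := joinEA;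
  meet_join_absorb := meetE_abs; join_meet_absorb := joinE_abs;
  meet0 := meetE0; join1 := joinE1; complK := complEK;
  compl_anti := complE_anti; meet_compl := meetE_compl; join_compl := joinE_compl |}.

Lemma LE_OM : orthomodular LE.
Proof.
  intros a b H. unfold ole in H. simpl in *. apply eqbE_true.
  assert (Hc := forall2 (fun a b => implb (eqbE (meetE a b) a)
    (eqbE b (joinE a (meetE (complE a) b)))) ltac:(vm_compute; reflexivity) a b).
  simpl in Hc. rewrite H, eqbE_refl in Hc. exact Hc.
Qed.

Lemma LE_not_Go n : (3 <= n)%nat -> ~ satisfies_Go n LE.
Proof.
  intros Hn HG. specialize (HG (s3 LE e16 e23 e27)).
  rewrite go_fwd_s3, go_bwd_s3 in HG by exact Hn.
  vm_compute in HG. discriminate HG.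
Qed.

Theorem theorem5p6 :
  (forall (n : nat), (3 <= n)%nat ->
     forall L : OL, admits_strong_states L -> satisfies_Go n L) /\
  (forall (n : nat), (3 <= n)%nat ->
     forall L : OL, satisfies_Go n L -> orthomodular L) /\
  (forall (n : nat), (3 <= n)%nat ->
     exists L : OL, orthomodular L /\ ~ satisfies_Go n L).
Proof.
  split; [|split].
  - intros n _ L H. apply states_Go, H.
  - intros n Hn L H. eapply Go_OM; eauto.
  - intros n Hn. exists LE. split; [apply LE_OM | apply LE_not_Go; exact Hn].
Qed.
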